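(* Let $[a,b]\subset[0,1]$, $c\in(0,1]$, $K=\{u\in\mathcal C([0,1]): u\ge 0,\ \min_{t\in[a,b]}u(t)\ge c\|u\|\}$ with the supremum norm $\|\cdot\|$. Assume: (H1) $f:[0,1]\times[0,\infty)\to[0,\infty)$ is such that $f(\cdot,u(\cdot))$ is measurable whenever $u\in\mathcal C([0,1])$, and for each $r>0$ there is $R>0$ with $f(t,u)\le R$ for a.a. $t\in[0,1]$ and all $u\in[0,r]$; (H2) $g$ is measurable and $g\ge 0$ a.e.; (H3) $k:[0,1]\times[0,1]\to[0,\infty)$ is continuous; (H4) there is a measurable $\Phi:[0,1]\to[0,\infty)$ with $\Phi g\in L^1(0,1)$, $\int_a^b\Phi g>0$, $k(t,s)\le\Phi(s)$ for all $t,s\in[0,1]$ and $c\Phi(s)\le k(t,s)$ for $t\in[a,b]$, $s\in[0,1]$. Let $T:K\to K$, $Tu(t)=\int_0^1k(t,s)g(s)f(s,u(s))\,ds$, and let $\mathbb T$ be its closed--convex envelope. Suppose that $\{u\}\cap\mathbb{T}u\subset\{Tu\}$ for all $u\in K\cap\mathbb{T}K$, and that there exist $\rho>0$ and $\varepsilon>0$ such that $f_{\rho,\varepsilon}>M(a,b)$, where $$f_{\rho,\varepsilon}:=\inf_{a\le t\le b,\ c(\rho-\varepsilon)\le u\le \frac{\rho}{c}+\varepsilon}\frac{f(t,u)}{\rho},\qquad \frac1{M(a,b)}:=\inf_{t\in[a,b]}\int_a^bk(t,s)g(s)\,ds.$$ Let $V_\rho=\{u\in K:\min_{a\le t\le b}u(t)<\rho\}$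 and $e(t)\equiv1$. Then $u\notin\mathbb{T}u+\lambda e$ for all $u\in\partial V_\rho$ and all $\lambda\ge0$.
   Context: The closed--convex envelope of $T:K\to K$ is $\mathbb{T}u=\bigcap_{\varepsilon>0}\overline{\mathrm{co}}\,T\big(\overline B_\varepsilon(u)\cap K\big)$, with $\overline B_\varepsilon(u)$ the closed ball in $\mathcal C([0,1])$ and $\overline{\mathrm{co}}$ the closed convex hull; $\mathbb TK=\bigcup_{u\in K}\mathbb Tu$ and $\mathbb Tu+\lambda e=\{y+\lambda e:y\in\mathbb Tu\}$. $V_\rho$ is a relatively open subset of $K$ and $\partial V_\rho$ denotes its boundary relative to $K$. *)

(* Defs.v *)
(* R : realType; C([0,1]) elements are functions
   R -> R continuous on `[0,1]; all comparisons happen on `[0,1]. *)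
From HB Require Import structures.
From mathcomp Require Import all_boot all_order all_algebra.
From mathcomp Require Import all_classical all_reals all_analysis.
Set Implicit Arguments. Unset Strict Implicit. Unset Printing Implicit Defensive.
Import Order.TTheory GRing.Theory Num.Theory.
Import numFieldNormedType.Exports.
Local Open Scope classical_set_scope.
Local Open Scope ring_scope.

Section Defs.
Variable R : realType.

Definition isC (u : R -> R) : Prop := {within `[0, 1], continuous u}.

Definition supnorm (u : R -> R) : R := sup [set `|u t| | t in `[0, 1]].

Definition minab (a b : R) (u : R -> R) : R := inf [set u t | t in `[a, b]].

Definition Kcone (a b c : R) (u : R -> R) : Prop :=
  isC u /\ (forall t, t \in `[0, 1] -> 0 <= u t) /\ c * supnorm u <= minab a b u.

Definition cball (u : R -> R) (e : R) (v : R -> R) : Prop :=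
  forall t, t \in `[0, 1] -> `|u t - v t| <= e.

Definition convhull (A : set (R -> R)) (z : R -> R) : Prop :=
  exists n (w : 'I_n -> R) (x : 'I_n -> (R -> R)),
    (forall i, 0 <= w i) /\ \sum_(i < n) w i = 1 /\ (forall i, A (x i)) /\
    z = (fun t => \sum_(i < n) w i * x i t).

Definition clconvhull (A : set (R -> R)) (y : R -> R) : Prop :=
  isC y /\ forall d, 0 < d -> exists z, convhull A z /\ cball y d z.

Definition Top (k : R -> R -> R) (g : R -> R) (f : R -> R -> R) (u : R -> R)
  : R -> R :=
  fun t => \int[@lebesgue_measure R]_(s in `[0, 1]) (k t s * g s * f s (u s)).

Definition envelope (K : set (R -> R)) (T : (R -> R) -> (R -> R))
  (u : R -> R) : set (R -> R) :=
  fun y => forall e, 0 < e ->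
    clconvhull (fun z => exists v, K v /\ cball u e v /\ z = T v) y.

Definition envelopeK (K : set (R -> R)) (T : (R -> R) -> (R -> R))
  : set (R -> R) := fun y => exists u, K u /\ envelope K T u y.

Definition rel_boundary (K V : set (R -> R)) (u : R -> R) : Prop :=
  K u /\
  (forall d, 0 < d -> exists v, K v /\ V v /\ cball u d v) /\
  (forall d, 0 < d -> exists v, K v /\ ~ V v /\ cball u d v).

Definition f_re (a b c : R) (f : R -> R -> R) (rho eps : R) : R :=
  inf [set f t x / rho | t in `[a, b] & x in
        [set x | 0 <= x /\ c * (rho - eps) <= x /\ x <= rho / c + eps]].

Definition Mab (a b : R) (k : R -> R -> R) (g : R -> R) : R :=
  (inf [set \int[@lebesgue_measure R]_(s in `[a, b]) (k t s * g s)
       | t in `[a, b]])^-1.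

End Defs.

(* Main.v *)
Require Import Defs.
From HB Require Import structures.
From mathcomp Require Import all_boot all_order all_algebra.
From mathcomp Require Import all_classical all_reals all_analysis.
From mathcomp Require Import measurable_realfun ring lra.
Import Order.TTheory GRing.Theory Num.Theory.
Import numFieldNormedType.Exports.
Local Open Scope classical_set_scope.
Local Open Scope ring_scope.

Lemma minab_lb (R : realType) (a b : R) (u : R -> R) :
  (forall t, t \in `[a, b] -> 0 <= u t) ->
  forall t, t \in `[a, b] -> minab a b u <= u t.
Proof.
move=> u0 t tab; apply: ge_inf; last by exists t.
by exists 0 => _ [s sab <-]; apply: u0.
Qed.

Lemma minab_adh (R : realType) (a b : R) (u : R -> R) : a <= b ->
  (forall t, t \in `[a, b] -> 0 <= u t) ->
  forall r, minab a b u < r -> exists2 t, t \in `[a, b] & u t < r.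
Proof.
move=> ab u0 r hr.
have hi : has_inf [set u t | t in `[a, b]].
  split; first by exists (u a), a => //=; rewrite in_itv /= lexx ab.
  by exists 0 => _ [s sab <-]; apply: u0.
have hr' : 0 < r - minab a b u by rewrite subr_gt0.
have [_ [t tab <-] ht] := inf_adherent hr' hi.
by exists t => //; move: ht; rewrite /minab addrC subrK.
Qed.

Lemma supnorm_ub (R : realType) (u : R -> R) : isC u ->
  (forall t, t \in `[0, 1] -> 0 <= u t) ->
  forall t, t \in `[0, 1] -> u t <= supnorm u.
Proof.
move=> cu u0 t t01.
have [m m01 hm] := @EVT_max R u 0 1 ler01 cu.
apply: le_trans (ler_norm _) _.
apply: ub_le_sup; last by exists t.
by exists (u m) => _ [s s01 <-]; rewrite ger0_norm ?u0 //; apply: hm.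
Qed.
Arguments minab_lb {R a b u} _ {t}.
Arguments minab_adh {R a b u} _ _ {r}.
Arguments supnorm_ub {R u} _ _ {t}.

Lemma k_cont (R : realType) (k : R -> R -> R)
  (hkc : {within [set p : R * R | p.1 \in `[0, 1] /\ p.2 \in `[0, 1]],
           continuous (fun p : R * R => k p.1 p.2)}) t :
  t \in `[0, 1] -> {within `[0, 1], continuous (k t)}.
Proof.
move=> t01.
apply/subspace_continuousP => s s01.
move/subspace_continuousP: hkc => /(_ (t, s)) /=.
have hs : s \in `[0, 1] by rewrite inE.
move=> /(_ (conj t01 hs)) h.
move=> W /= hW.
have := h W hW.
rewrite /within /= !near_simpl => hn.
have cp : (fun x : R => (t, x)) @ nbhs s --> nbhs (t, s).
  apply: (@cvg_pair _ _ _ _ (nbhs t) (nbhs s)); [exact: cvg_cst | exact: cvg_id].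
have := cp _ hn.
rewrite /= !near_simpl.
apply: filterS => x hx xs; apply: hx; split => //=; exact/mem_set.
Qed.

Lemma k_meas (R : realType) (k : R -> R -> R)
  (hkc : {within [set p : R * R | p.1 \in `[0, 1] /\ p.2 \in `[0, 1]],
           continuous (fun p : R * R => k p.1 p.2)}) t :
  t \in `[0, 1] -> measurable_fun (`[0, 1] : set R) (k t).
Proof.
move=> t01; apply: subspace_continuous_measurable_fun => //.
exact: k_cont.
Qed.


Lemma int_gG (R : realType) (g : R -> R)
  (hgmeas : measurable_fun (`[0, 1] : set R) g)
  (hg0 : {ae @lebesgue_measure R, forall t, t \in `[0, 1] -> 0 <= g t})
  (D : set R) (mD : measurable D) (DS : D `<=` `[0, 1]) (h : R -> R)
  (mh : measurable_fun D h) :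
  (\int[@lebesgue_measure R]_(s in D) (h s * g s)%:E =
   \int[@lebesgue_measure R]_(s in D) (h s * (g \max cst 0) s)%:E)%E.
Proof.
have mg : measurable_fun D g by exact: measurable_funS hgmeas.
apply: ae_eq_integral => //.
- by apply/measurable_EFinP; apply: measurable_funM.
- apply/measurable_EFinP; apply: measurable_funM => //.
  by apply: measurable_maxr => //; exact: measurable_cst.
- case: hg0 => N [mN N0 sN]; exists N; split => // x /= hx; apply: sN => /= hg.
  apply: hx => Dx.
  have x01 : x \in `[0, 1] by exact: DS.
  by rewrite max_l // hg.
Qed.

Lemma Top_lb (R : realType) (a b : R) (f : R -> R -> R) (g : R -> R)
  (k : R -> R -> R) (Phi : R -> R)
  (ha : 0 <= a) (hab : a <= b) (hb : b <= 1)
  (hf0 : forall t x, t \in `[0, 1] -> 0 <= x -> 0 <= f t x)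
  (hfmeas : forall u : R -> R, isC u -> (forall t, t \in `[0, 1] -> 0 <= u t) ->
     measurable_fun (`[0, 1] : set R) (fun t => f t (u t)))
  (hfbd : forall r : R, 0 < r -> exists2 Rb : R, 0 < Rb &
     {ae @lebesgue_measure R, forall t, t \in `[0, 1] ->
        forall x, 0 <= x <= r -> f t x <= Rb})
  (hgmeas : measurable_fun (`[0, 1] : set R) g)
  (hg0 : {ae @lebesgue_measure R, forall t, t \in `[0, 1] -> 0 <= g t})
  (hkc : {within [set p : R * R | p.1 \in `[0, 1] /\ p.2 \in `[0, 1]],
           continuous (fun p : R * R => k p.1 p.2)})
  (hk0 : forall t s, t \in `[0, 1] -> s \in `[0, 1] -> 0 <= k t s)
  (hPhimeas : measurable_fun (`[0, 1] : set R) Phi)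
  (hPhi0 : forall s, s \in `[0, 1] -> 0 <= Phi s)
  (hPhig : (@lebesgue_measure R).-integrable `[0, 1] (fun s => (Phi s * g s)%:E))
  (hkPhi : forall t s, t \in `[0, 1] -> s \in `[0, 1] -> k t s <= Phi s)
  (v : R -> R) (hv : isC v) (hv0 : forall s, s \in `[0, 1] -> 0 <= v s)
  (r : R) (hvr : forall s, s \in `[0, 1] -> v s <= r)
  (L : R) (hL : 0 <= L) (hvL : forall s, s \in `[a, b] -> L <= f s (v s))
  (t : R) (ht : t \in `[0, 1]) :
  L * (\int[@lebesgue_measure R]_(s in (`[a%R, b%R] : set R)) (k t s * g s))%R <= Top k g f v t.
Proof.
set G := g \max cst 0.
have mG : measurable_fun (`[0, 1] : set R) G.
  by apply: measurable_maxr => //; exact: measurable_cst.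
have G0 s : 0 <= G s by rewrite /G /= le_max lexx orbT.
have mk := @k_meas R k hkc t ht.
have mfv := hfmeas v hv hv0.
have sab : (`[a, b] : set R) `<=` `[0, 1].
  move=> x /=; rewrite !in_itv /= => /andP[ax xb]; apply/andP; split.
    exact: le_trans ax.
  exact: le_trans hb.
have mab : measurable (`[a, b] : set R) by [].
have m01 : measurable (`[0, 1] : set R) by [].
have sab' s : s \in `[a, b] -> s \in `[0, 1] by move=> h; exact: sab.
set A := (\int[@lebesgue_measure R]_(s in (`[0%R, 1%R] : set R)) ((k t s * f s (v s)) * G s)%:E)%E.
set B := (\int[@lebesgue_measure R]_(s in (`[a%R, b%R] : set R)) (k t s * G s)%:E)%E.
set PG := (\int[@lebesgue_measure R]_(s in (`[0%R, 1%R] : set R)) (Phi s * G s)%:E)%E.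
have eTop : Top k g f v t = fine A.
  rewrite /Top /Rintegral; congr fine.
  rewrite (_ : (\int[@lebesgue_measure R]_(x in (`[0%R, 1%R] : set R)) (k t x * g x * f x (v x))%:E =
     \int[@lebesgue_measure R]_(x in (`[0%R, 1%R] : set R)) ((k t x * f x (v x)) * g x)%:E)%E); last first.
    by apply: eq_integral => s _; rewrite mulrAC.
  apply: int_gG => //; exact: measurable_funM.
have eI : (\int[@lebesgue_measure R]_(s in (`[a%R, b%R] : set R)) (k t s * g s))%R = fine B.
  rewrite /Rintegral; congr fine; apply: int_gG => //.
  exact: measurable_funS mk.
have PGfin : PG \is a fin_num.
  rewrite /PG -int_gG //; exact: integrable_fin_num.
have mkG : measurable_fun (`[0, 1] : set R) (fun s => (k t s * G s)%:E).
  by apply/measurable_EFinP; apply: measurable_funM.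
have mPG : measurable_fun (`[0, 1] : set R) (fun s => (Phi s * G s)%:E).
  by apply/measurable_EFinP; apply: measurable_funM.
have mA : measurable_fun (`[0, 1] : set R) (fun s => ((k t s * f s (v s)) * G s)%:E).
  by apply/measurable_EFinP; apply: measurable_funM => //; apply: measurable_funM.
have B0 : (0 <= B)%E.
  apply: integral_ge0 => s sab1; rewrite lee_fin mulr_ge0 //; apply: hk0 => //.
  exact: sab'.
have BPG : (B <= PG)%E.
  apply: (@le_trans _ _ (\int[@lebesgue_measure R]_(s in (`[a%R, b%R] : set R)) (Phi s * G s)%:E)%E).
    apply: ge0_le_integral => //.
    - move=> s sab1; rewrite lee_fin mulr_ge0 //; apply: hk0 => //; exact: sab'.
    - exact: measurable_funS mkG.
    - exact: measurable_funS mPG.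
    - move=> s sab1; rewrite lee_fin ler_wpM2r //; apply: hkPhi => //; exact: sab'.
  apply: ge0_subset_integral => // s s01; rewrite lee_fin mulr_ge0 //; exact: hPhi0.
have r0 : 0 < r + 1.
  have : (0:R) \in `[0, 1] by rewrite in_itv /= lexx ler01.
  move=> h0; have := hv0 _ h0; have := hvr _ h0; lra.
have [Rb Rb0 hae] := hfbd _ r0.
have APG : (A <= Rb%:E * PG)%E.
  rewrite /PG -ge0_integralZl_EFin //; last by rewrite ltW.
  - under [X in (_ <= X)%E]eq_integral do rewrite -EFinM.
    apply: ae_ge0_le_integral => //.
    + move=> s s01; rewrite lee_fin mulr_ge0 // mulr_ge0 //.
        by apply: hk0.
      by apply: hf0 => //; apply: hv0.
    + move=> s s01; rewrite lee_fin mulr_ge0 // ?mulr_ge0 //; [exact: ltW | exact: hPhi0].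
    + apply/measurable_EFinP; apply: measurable_funM; first exact: measurable_cst.
      exact: measurable_funM.
    + case: hae => N [mN N0 sN]; exists N; split => // x /= hx; apply: sN => /= hg.
      apply: hx => x01.
      rewrite lee_fin mulrA (mulrC Rb) ler_wpM2r // ler_pM //.
      * by apply: hk0.
      * by apply: hf0 => //; apply: hv0.
      * by apply: hkPhi.
      * apply: hg => //; apply/andP; split; first exact: hv0.
        have := hvr _ x01; lra.
  - move=> s s01; rewrite lee_fin mulr_ge0 //; exact: hPhi0.
have LBA : (L%:E * B <= A)%E.
  rewrite /B -ge0_integralZl_EFin //; cycle 1.
  all: try (by apply: measurable_funS mkG).
  all: try (by move=> s sab1; rewrite lee_fin mulr_ge0 //; apply: hk0 => //; exact: sab').
  under eq_integral do rewrite -EFinM.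
  apply: (@le_trans _ _ (\int[@lebesgue_measure R]_(s in (`[a%R, b%R] : set R)) ((k t s * f s (v s)) * G s)%:E)%E).
    apply: ge0_le_integral => //.
    - move=> s sab1; rewrite lee_fin mulr_ge0 // mulr_ge0 //; apply: hk0 => //; exact: sab'.
    - apply/measurable_EFinP; apply: measurable_funM; first exact: measurable_cst.
      by apply: measurable_funM; [exact: measurable_funS mk | exact: measurable_funS mG].
    - exact: measurable_funS mA.
    - move=> s sab1; rewrite lee_fin mulrCA mulrA ler_wpM2r // ler_wpM2l //.
        by apply: hk0 => //; exact: sab'.
      by apply: hvL; exact: sab1.
  apply: ge0_subset_integral => // s s01; rewrite lee_fin mulr_ge0 // mulr_ge0 //.
    by apply: hk0.
  by apply: hf0 => //; apply: hv0.
have A0 : (0 <= A)%E by apply: le_trans LBA; rewrite mule_ge0.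
have Afin : A \is a fin_num.
  rewrite ge0_fin_numE //; apply: (le_lt_trans APG).
  by rewrite ltey_eq fin_numM.
have Bfin : B \is a fin_num.
  rewrite ge0_fin_numE //; apply: (le_lt_trans BPG).
  by rewrite ltey_eq PGfin.
have LBfin : (L%:E * B)%E \is a fin_num by rewrite fin_numM.
have h := fine_le LBfin Afin LBA.
by rewrite fineM // in h; rewrite eTop eI.
Qed.

Lemma I_lb (R : realType) (a b c : R) (g : R -> R)
  (k : R -> R -> R) (Phi : R -> R)
  (ha : 0 <= a) (hab : a <= b) (hb : b <= 1) (hc0 : 0 < c)
  (hgmeas : measurable_fun (`[0, 1] : set R) g)
  (hg0 : {ae @lebesgue_measure R, forall t, t \in `[0, 1] -> 0 <= g t})
  (hkc : {within [set p : R * R | p.1 \in `[0, 1] /\ p.2 \in `[0, 1]],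
           continuous (fun p : R * R => k p.1 p.2)})
  (hk0 : forall t s, t \in `[0, 1] -> s \in `[0, 1] -> 0 <= k t s)
  (hPhimeas : measurable_fun (`[0, 1] : set R) Phi)
  (hPhi0 : forall s, s \in `[0, 1] -> 0 <= Phi s)
  (hPhig : (@lebesgue_measure R).-integrable `[0, 1] (fun s => (Phi s * g s)%:E))
  (hkPhi : forall t s, t \in `[0, 1] -> s \in `[0, 1] -> k t s <= Phi s)
  (hPhik : forall t s, t \in `[a, b] -> s \in `[0, 1] -> c * Phi s <= k t s)
  (t : R) (ht : t \in `[a, b]) :
  c * (\int[@lebesgue_measure R]_(s in `[a, b]) (Phi s * g s))%R
   <= (\int[@lebesgue_measure R]_(s in `[a, b]) (k t s * g s))%R.
Proof.
set G := g \max cst 0.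
have mG : measurable_fun (`[0, 1] : set R) G.
  by apply: measurable_maxr => //; exact: measurable_cst.
have G0 s : 0 <= G s by rewrite /G /= le_max lexx orbT.
have sab : (`[a, b] : set R) `<=` `[0, 1].
  move=> x /=; rewrite !in_itv /= => /andP[ax xb]; apply/andP; split.
    exact: le_trans ax.
  exact: le_trans hb.
have sab' s : s \in `[a, b] -> s \in `[0, 1] by move=> h; exact: sab.
have t01 := sab' _ ht.
have mk := @k_meas R k hkc t t01.
have mab : measurable (`[a, b] : set R) by [].
have m01 : measurable (`[0, 1] : set R) by [].
set B := (\int[@lebesgue_measure R]_(s in (`[a%R, b%R] : set R)) (k t s * G s)%:E)%E.
set P := (\int[@lebesgue_measure R]_(s in (`[a%R, b%R] : set R)) (Phi s * G s)%:E)%E.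
set PG := (\int[@lebesgue_measure R]_(s in (`[0%R, 1%R] : set R)) (Phi s * G s)%:E)%E.
have eI : (\int[@lebesgue_measure R]_(s in `[a, b]) (k t s * g s))%R = fine B.
  rewrite /Rintegral; congr fine; apply: int_gG => //.
  exact: measurable_funS mk.
have eP : (\int[@lebesgue_measure R]_(s in `[a, b]) (Phi s * g s))%R = fine P.
  rewrite /Rintegral; congr fine; apply: int_gG => //.
  exact: measurable_funS hPhimeas.
have PGfin : PG \is a fin_num.
  rewrite /PG -int_gG //; exact: integrable_fin_num.
have mkG : measurable_fun (`[0, 1] : set R) (fun s => (k t s * G s)%:E).
  by apply/measurable_EFinP; apply: measurable_funM.
have mPG : measurable_fun (`[0, 1] : set R) (fun s => (Phi s * G s)%:E).
  by apply/measurable_EFinP; apply: measurable_funM.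
have P0 : (0 <= P)%E.
  apply: integral_ge0 => s sab1; rewrite lee_fin mulr_ge0 //; apply: hPhi0 => //.
  exact: sab'.
have BPG : (B <= PG)%E.
  apply: (@le_trans _ _ P).
    apply: ge0_le_integral => //.
    - move=> s sab1; rewrite lee_fin mulr_ge0 //; apply: hk0 => //; exact: sab'.
    - exact: measurable_funS mkG.
    - exact: measurable_funS mPG.
    - move=> s sab1; rewrite lee_fin ler_wpM2r //; apply: hkPhi => //; exact: sab'.
  apply: ge0_subset_integral => // s s01; rewrite lee_fin mulr_ge0 //; exact: hPhi0.
have PPG : (P <= PG)%E.
  apply: ge0_subset_integral => // s s01; rewrite lee_fin mulr_ge0 //; exact: hPhi0.
have cPB : (c%:E * P <= B)%E.
  rewrite /P -ge0_integralZl_EFin //; cycle 1.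
  all: try (by apply: measurable_funS mPG).
  all: try (by move=> s sab1; rewrite lee_fin mulr_ge0 //; apply: hPhi0 => //; exact: sab').
  all: try (by rewrite ltW).
  under eq_integral do rewrite -EFinM.
  apply: ge0_le_integral => //.
  - move=> s sab1; rewrite lee_fin mulr_ge0 // ?mulr_ge0 //; first exact: ltW.
    apply: hPhi0; exact: sab'.
  - apply/measurable_EFinP; apply: measurable_funM; first exact: measurable_cst.
    by apply: measurable_funM; [exact: measurable_funS hPhimeas | exact: measurable_funS mG].
  - exact: measurable_funS mkG.
  - move=> s sab1; rewrite lee_fin mulrA ler_wpM2r //; apply: hPhik => //.
    exact: sab'.
have B0 : (0 <= B)%E by apply: le_trans cPB; rewrite mule_ge0 // lee_fin ltW.
have Bfin : B \is a fin_num.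
  rewrite ge0_fin_numE //; apply: (le_lt_trans BPG).
  by rewrite ltey_eq PGfin.
have Pfin : P \is a fin_num.
  rewrite ge0_fin_numE //; apply: (le_lt_trans PPG).
  by rewrite ltey_eq PGfin.
have LBfin : (c%:E * P)%E \is a fin_num by rewrite fin_numM.
have h := fine_le LBfin Bfin cPB.
by rewrite fineM // in h; rewrite eI eP.
Qed.

Lemma P_pos (R : realType) (a b : R) (g : R -> R) (Phi : R -> R)
  (ha : 0 <= a) (hab : a <= b) (hb : b <= 1)
  (hPhig : (@lebesgue_measure R).-integrable `[0, 1] (fun s => (Phi s * g s)%:E))
  (hPhigpos : (0 < \int[@lebesgue_measure R]_(s in `[a, b]) (Phi s * g s)%:E)%E) :
  0 < (\int[@lebesgue_measure R]_(s in `[a, b]) (Phi s * g s))%R.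
Proof.
have sab : (`[a, b] : set R) `<=` `[0, 1].
  move=> x /=; rewrite !in_itv /= => /andP[ax xb]; apply/andP; split.
    exact: le_trans ax.
  exact: le_trans hb.
have hi : (@lebesgue_measure R).-integrable `[a, b] (fun s => (Phi s * g s)%:E).
  exact: integrableS hPhig.
have hf : (\int[@lebesgue_measure R]_(s in (`[a%R, b%R] : set R)) (Phi s * g s)%:E)%E \is a fin_num.
  by apply: integrable_fin_num.
rewrite /Rintegral; apply: fine_gt0; rewrite hPhigpos /=.
by rewrite ltey_eq hf.
Qed.
Theorem lemma3 (R : realType) (a b c : R) (f : R -> R -> R) (g : R -> R)
  (k : R -> R -> R) (Phi : R -> R) (rho eps : R)
  (* [a,b] ⊂ [0,1], c ∈ (0,1] *)
  (ha : 0 <= a) (hab : a <= b) (hb : b <= 1) (hc0 : 0 < c) (hc1 : c <= 1)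
  (* (H1) *)
  (hf0 : forall t x, t \in `[0, 1] -> 0 <= x -> 0 <= f t x)
  (hfmeas : forall u : R -> R, isC u -> (forall t, t \in `[0, 1] -> 0 <= u t) ->
     measurable_fun (`[0, 1] : set R) (fun t => f t (u t)))
  (hfbd : forall r : R, 0 < r -> exists2 Rb : R, 0 < Rb &
     {ae @lebesgue_measure R, forall t, t \in `[0, 1] ->
        forall x, 0 <= x <= r -> f t x <= Rb})
  (* (H2) *)
  (hgmeas : measurable_fun (`[0, 1] : set R) g)
  (hg0 : {ae @lebesgue_measure R, forall t, t \in `[0, 1] -> 0 <= g t})
  (* (H3) *)
  (hkc : {within [set p : R * R | p.1 \in `[0, 1] /\ p.2 \in `[0, 1]],
           continuous (fun p : R * R => k p.1 p.2)})
  (hk0 : forall t s, t \in `[0, 1] -> s \in `[0, 1] -> 0 <= k t s)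
  (* (H4) *)
  (hPhimeas : measurable_fun (`[0, 1] : set R) Phi)
  (hPhi0 : forall s, s \in `[0, 1] -> 0 <= Phi s)
  (hPhig : (@lebesgue_measure R).-integrable `[0, 1] (fun s => (Phi s * g s)%:E))
  (hPhigpos : (0 < \int[@lebesgue_measure R]_(s in `[a, b]) (Phi s * g s)%:E)%E)
  (hkPhi : forall t s, t \in `[0, 1] -> s \in `[0, 1] -> k t s <= Phi s)
  (hPhik : forall t s, t \in `[a, b] -> s \in `[0, 1] -> c * Phi s <= k t s)
  (* {u} ∩ 𝕋u ⊂ {Tu} for u ∈ K ∩ 𝕋K *)
  (hfix : forall u, Kcone a b c u ->
     envelopeK (Kcone a b c) (Top k g f) u ->
     envelope (Kcone a b c) (Top k g f) u u ->
     forall t, t \in `[0, 1] -> u t = Top k g f u t)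
  (* ρ, ε with f_{ρ,ε} > M(a,b) *)
  (hrho : 0 < rho) (heps : 0 < eps)
  (hfM : Mab a b k g < f_re a b c f rho eps) :
  forall u, rel_boundary (Kcone a b c)
              (fun v => Kcone a b c v /\ minab a b v < rho) u ->
  forall lam : R, 0 <= lam ->
  ~ (exists y, envelope (Kcone a b c) (Top k g f) u y /\
               forall t, t \in `[0, 1] -> u t = y t + lam).
Proof.
move=> u [Ku [hV hnV]] lam hlam [y [hy hu]].
have sab : (`[a, b] : set R) `<=` `[0, 1].
  move=> x /=; rewrite !in_itv /= => /andP[ax xb]; apply/andP; split.
    exact: le_trans ax.
  exact: le_trans hb.
have sab' s : s \in `[a, b] -> s \in `[0, 1] by move=> h; exact: sab.
have cb (w v : R -> R) d s : cball w d v -> s \in `[0, 1] -> w s - d <= v s /\ v s <= w s + d.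
  move=> h /h; rewrite ler_norml => /andP[h1 h2]; split; lra.
have K0 (v : R -> R) : Kcone a b c v -> forall s, s \in `[a, b] -> 0 <= v s.
  by move=> [_ [h _]] s /sab'; exact: h.
have aab : a \in `[a, b] by rewrite in_itv /= lexx hab.
have hle : minab a b u <= rho.
  rewrite leNgt; apply/negP => h.
  have d0 : 0 < minab a b u - rho by rewrite subr_gt0.
  have [v [Kv [[_ Vv] uv]]] := hV _ d0.
  have [s sab1 vs] := minab_adh hab (K0 _ Kv) Vv.
  have := minab_lb (K0 _ Ku) sab1.
  have [h1 h2] := cb _ _ _ _ uv (sab' _ sab1).
  lra.
have hge : rho <= minab a b u.
  rewrite leNgt; apply/negP => h.
  have d0 : 0 < (rho - minab a b u) / 2 by rewrite divr_gt0 // subr_gt0.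
  have [v [Kv [nVv uv]]] := hnV _ d0.
  have vge : rho <= minab a b v.
    by rewrite leNgt; apply/negP => hv; apply: nVv.
  have hr : minab a b u < minab a b u + (rho - minab a b u) / 2 by rewrite ltrDl.
  have [s sab1 us] := minab_adh hab (K0 _ Ku) hr.
  have := minab_lb (K0 _ Kv) sab1.
  have [h1 h2] := cb _ _ _ _ uv (sab' _ sab1).
  lra.
have hsup : forall s, s \in `[0, 1] -> u s <= rho / c.
  move=> s s01; case: Ku => [cu [u0 huK]].
  apply: (le_trans (supnorm_ub cu u0 s01)).
  rewrite ler_pdivlMr // mulrC; lra.
set I := fun t => (\int[@lebesgue_measure R]_(s in `[a, b]) (k t s * g s))%R.
set P := (\int[@lebesgue_measure R]_(s in `[a, b]) (Phi s * g s))%R.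
have P0 : 0 < P by apply: P_pos.
have IP : forall t, t \in `[a, b] -> c * P <= I t.
  by move=> t ht; apply: (@I_lb R a b c g k Phi).
set m := inf [set I t | t in `[a, b]].
have hlb : lbound [set I t | t in `[a, b]] (c * P) by move=> _ [t ht <-]; exact: IP.
have mP : c * P <= m by apply: lb_le_inf => //; exists (I a), a.
have m0 : 0 < m by apply: lt_le_trans mP; rewrite mulr_gt0.
have Im : forall t, t \in `[a, b] -> m <= I t.
  by move=> t ht; apply: ge_inf; [exists (c * P) | exists t].
set fre := f_re a b c f rho eps.
have hfM' : m^-1 < fre by exact: hfM.
have fre0 : 0 < fre by apply: lt_trans hfM'; rewrite invr_gt0.
have frem : 1 < fre * m.
  by rewrite -(mulVf (lt0r_neq0 m0)) ltr_pM2r.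
set rho' := rho * fre * m.
have rr : rho < rho'.
  by rewrite /rho' -mulrA -[X in X < _]mulr1 ltr_pM2l.
have Tlb : forall v, Kcone a b c v -> cball u eps v ->
    forall t, t \in `[a, b] -> rho' <= Top k g f v t.
  move=> v Kv uv t ht.
  have hvL : forall s, s \in `[a, b] -> rho * fre <= f s (v s).
    move=> s sab1.
    have s01 := sab' _ sab1.
    have [h1 h2] := cb _ _ _ _ uv s01.
    have us := minab_lb (K0 _ Ku) sab1.
    have v0 := K0 _ Kv _ sab1.
    have us2 := hsup _ s01.
    have hfs : fre <= f s (v s) / rho.
      apply: ge_inf.
        exists 0 => _ [t' ht' [x [x0 _] <-]].
        by apply: divr_ge0; [apply: hf0 => //; exact: sab | exact: ltW].
      exists s => //; exists (v s) => //; split => //; split; last lra.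
      have [hh|hh] := lerP (rho - eps) 0; nra.
    by rewrite mulrC -ler_pdivlMr.
  have := @Top_lb R a b f g k Phi ha hab hb hf0 hfmeas hfbd hgmeas hg0 hkc hk0
    hPhimeas hPhi0 hPhig hkPhi v Kv.1 Kv.2.1 (rho / c + eps) _ (rho * fre) _ hvL t (sab' _ ht).
  have := Im _ ht.
  rewrite /rho' /I => h1 h2.
  apply: le_trans (h2 _ _).
  - rewrite ler_wpM2l // mulr_ge0 // ltW //.
  - move=> s s01; have [h3 h4] := cb _ _ _ _ uv s01; have := hsup _ s01; lra.
  - by rewrite mulr_ge0 // ltW.
have ylb : forall t, t \in `[a, b] -> rho' <= y t.
  move=> t ht; rewrite leNgt; apply/negP => hyt.
  have d0 : 0 < (rho' - y t) / 2 by rewrite divr_gt0 // subr_gt0.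
  have [_ /(_ _ d0) [z [[n [w [x [w0 [w1 [Ax ->]]]]] yz]]]] := hy _ heps.
  have [h1 h2] := cb _ _ _ _ yz (sab' _ ht).
  have : rho' <= \sum_(i < n) w i * x i t.
    rewrite -[rho']mul1r -w1 mulr_suml; apply: ler_sum => i _.
    rewrite ler_wpM2l //; have [v [Kv [uv ->]]] := Ax i; exact: Tlb.
  move=> hz; lra.
have [s sab1 us] := minab_adh hab (K0 _ Ku) (le_lt_trans hle rr).
have := hu _ (sab' _ sab1); have := ylb _ sab1; lra.
Qed.
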